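(* Let $G$ be a graph and let $X\subseteq V(G)$. Then $\mathrm{cmp}(G)\le \mathrm{cmp}(G-X)+|X|$.
   Context: All graphs are finite and simple. A forest decomposition of a graph $G$ is a pair $(F,(W_x)_{x\in V(F)})$ where $F$ is a forest and $W_x\subseteq V(G)$, such that (1) for every vertex $u$ of $G$, $\{x\in V(F)\mid u\in W_x\}$ induces a nonempty connected subgraph of $F$, and (2) every edge $uv$ of $G$ has both ends in some bag $W_x$. Its width is the maximum size of a bag minus one. It is suitable if additionally (3) $F$ is a subgraph of $G$ with $V(F)=V(G)$, and (4) $u\in W_u$ for every $u\in V(G)$. The complexity $\mathrm{cmp}(G)$ is the minimum width of a suitable forest decomposition of $G$, with the convention $\mathrm{cmp}(G)=0$ if $G$ has no vertices. *)

(* Defs.v *)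
(* A finite simple graph is a finType T of vertices with a
   symmetric irreflexive edge relation e.  Induced subgraphs G[V] are handled
   by carrying the vertex set V : {set T} explicitly; G itself is V = [set: T]
   and G - X is V = ~: X. *)
From Stdlib Require Import ClassicalEpsilon.
From mathcomp Require Import all_boot.
Set Implicit Arguments. Unset Strict Implicit. Unset Printing Implicit Defensive.

Section Defs.
Variable T : finType.

Definition forest (f : rel T) : Prop :=
  forall (x : T) (p : seq T), uniq (x :: p) -> 2 <= size p ->
    path f x p -> ~~ f (last x p) x.

(* (F, (W_x)_{x in V}) is a suitable forest decomposition of G[V], where
   G = (T, e) and F = (V, f). *)
Definition suitable_fd (e : rel T) (V : {set T}) (f : rel T) (W : T -> {set T}) : Prop :=
      (forall a b, f a b -> [/\ a \in V, b \in V & e a b]) /\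
      symmetric f /\
      forest f /\
      (forall x, x \in V -> W x \subset V) /\
      (forall u, u \in V -> (exists2 x, x \in V & u \in W x) /\
         forall x y, x \in V -> y \in V -> u \in W x -> u \in W y ->
           connect [rel a b | [&& f a b, u \in W a & u \in W b]] x y) /\
      (forall u v, u \in V -> v \in V -> e u v ->
         exists2 x, x \in V & (u \in W x) && (v \in W x)) /\
      (forall u, u \in V -> u \in W u).

Definition has_sfd (e : rel T) (V : {set T}) (k : nat) : Prop :=
  exists f W, suitable_fd e V f W /\ forall x, x \in V -> #|W x| <= k.+1.

Definition pbool (P : Prop) : bool :=
  if excluded_middle_informative P then true else false.

(* Widths are always <= |V|-1 (bags are subsets of V), so searching
   0..|V|-1 suffices; for V empty the least such k is 0 (convention). *)
Definition cmp (e : rel T) (V : {set T}) : nat :=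
  find (fun k => pbool (has_sfd e V k)) (iota 0 #|V|).

End Defs.

(* Main.v *)
Require Import Defs.
From mathcomp Require Import all_boot.

From Stdlib Require Import ClassicalEpsilon.
Set Implicit Arguments. Unset Strict Implicit. Unset Printing Implicit Defensive.

Lemma connect_lift (T : finType) (R1 R2 : rel T) (P : pred T) a b :
  P a -> (forall x y, P x -> R1 x y -> P y && R2 x y) ->
  connect R1 a b -> connect R2 a b.
Proof.
move=> Pa H /connectP [p Hp ->].
elim: p a Pa Hp => [|y p IH] a Pa /=; first by rewrite connect0.
case/andP => Hay Hp; case/andP: (H _ _ Pa Hay) => Py R2ay.
exact: connect_trans (connect1 R2ay) (IH _ Py Hp).
Qed.

Lemma forest_cycle (T : finType) (f : rel T) :
  forest f <-> forall c, uniq c -> 2 < size c -> ~~ cycle f c.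
Proof.
split.
- move=> H [|x p] //= u s; rewrite rcons_path; apply/negP => /andP[Hp Hl].
  by move/negP: (H x p u s Hp).
- move=> H x p u s Hp; apply/negP => Hl.
  by move/negP: (H (x :: p) u s); rewrite /= rcons_path Hp Hl.
Qed.

Section Step.
Variables (T : finType) (e : rel T) (e_sym : symmetric e) (V : {set T}) (v : T)
  (f : rel T) (W : T -> {set T}).
Hypothesis vV : v \notin V.
Hypothesis fV : forall a b, f a b -> [/\ a \in V, b \in V & e a b].
Hypothesis fsym : symmetric f.

Definition compv z := [exists w, [&& w \in V, e v w & connect f z w]].
Definition repv z := [pick w | [&& w \in V, e v w & connect f z w]].
Definition attv w := [&& w \in V, e v w & repv w == Some w].
Definition f' (a b : T) : bool := [|| f a b, (a == v) && attv b | (b == v) && attv a].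
Definition W' x := if x == v then [set v] else if compv x then v |: W x else W x.

Lemma cf_sym : connect_sym f. Proof. exact: sym_connect_sym. Qed.

Lemma repv_eq a b : connect f a b -> repv a = repv b.
Proof. by move=> ab; apply: eq_pick => w /=; rewrite (same_connect cf_sym ab). Qed.

Lemma compv_eq a b : connect f a b -> compv a = compv b.
Proof. by move=> ab; apply: eq_existsb => w /=; rewrite (same_connect cf_sym ab). Qed.

Lemma repvP a r : repv a = Some r -> [/\ r \in V, e v r & connect f a r].
Proof. by rewrite /repv; case: pickP => [r' /and3P[? ? ?] [<-] | //]. Qed.

Lemma compv_rep a : compv a -> exists2 r, repv a = Some r & attv r /\ connect f a r.
Proof.
move=> /existsP[w Hw]; case E: (repv a) => [r|]; last first.
  by move: E; rewrite /repv; case: pickP => [x _ //| /(_ w) /=]; rewrite Hw.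
have [rV er ar] := repvP E; exists r => //; split => //.
by rewrite /attv rV er /= -(repv_eq ar) E.
Qed.

Lemma f'_f a b : a != v -> b != v -> f' a b = f a b.
Proof. by move=> /negbTE av /negbTE bv; rewrite /f' av bv /= !orbF. Qed.

Lemma path_f'_f a s : a != v -> v \notin s -> path f' a s -> path f a s.
Proof.
elim: s a => [|b s IH] a //= av; rewrite inE negb_or eq_sym => /andP[bv vs].
by case/andP => H1 H2; rewrite -f'_f // H1 IH.
Qed.

Lemma f'_forest : forest f -> forest f'.
Proof.
move/forest_cycle => Hf; apply/forest_cycle => c u s.
case vc: (v \in c); last first.
  case: c vc u s => [|x p] //; move/negbT; rewrite inE negb_or eq_sym => /andP[xv vp] u s.
  apply/negP => /= Hp; move/negP: (Hf _ u s); apply.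
  by rewrite /= (path_f'_f xv) // mem_rcons inE negb_or eq_sym xv.
case/rot_to: vc => i q Hr.
rewrite -(rot_cycle i) Hr; rewrite -(rot_uniq i) Hr in u; rewrite -(size_rot i) Hr in s.
case: q Hr u s => [|p1 [|a r]] // Hr u s.
move: u; rewrite /= => /and4P[vq p1q _ _].
have pv : v \notin a :: r by move: vq; rewrite in_cons negb_or => /andP[].
have p1v : p1 != v by move: vq; rewrite in_cons negb_or eq_sym => /andP[].
apply/negP => /and3P[H1 Ha Hb].
have : path f' p1 (rcons (a :: r) v) by rewrite /= Ha Hb.
rewrite rcons_path => /andP[H2 H3].
have Hp := path_f'_f p1v pv H2.
set l := last a r in H3 Hp.
have la : l \in a :: r by exact: mem_last.
have lv : l != v by apply: contraNneq pv => <-.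
have Ha1 : attv p1.
  by move: H1; rewrite /f' eqxx /= (negbTE p1v) /= orbF => /orP[/fV[] | ]; rewrite ?(negbTE vV).
have Hal : attv l.
  by move: H3; rewrite /f' eqxx /= (negbTE lv) /= => /orP[/fV[] | ]; rewrite ?(negbTE vV).
have cl : connect f p1 l by apply/connectP; exists (a :: r).
move: Ha1 Hal; rewrite /attv (repv_eq cl) => /and3P[_ _ /eqP->] /and3P[_ _ /eqP[]] E.
by move: p1q; rewrite E la.
Qed.

Lemma f'_sym : symmetric f'.
Proof. by move=> a b; rewrite /f' fsym; congr (_ || _); exact: orbC. Qed.

Lemma sfd_step : suitable_fd e V f W -> suitable_fd e (v |: V) f' W'.
Proof.
move=> [_ [_ [ffor [WV [Wc [We Wu]]]]]].
have inV x : x \in v |: V -> x != v -> x \in V.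
  by rewrite in_setU1 => /orP[/eqP->|]; rewrite ?eqxx.
have Wv x : x != v -> W' x = if compv x then v |: W x else W x.
  by rewrite /W' => /negbTE->.
have Wsub x : x != v -> W x \subset W' x.
  by move=> xv; rewrite Wv //; case: compv => //; exact: subsetU1.
have cV z : z \in V -> e v z -> compv z.
  by move=> zV ez; apply/existsP; exists z; rewrite zV ez connect0.
have neqv z : z \in V -> z != v by move=> zV; apply: contraNneq vV => <-.
have WuV' u : u \in v |: V -> u \in W' u.
  case: (eqVneq u v) => [->|uv]; first by rewrite /W' eqxx set11.
  move=> /inV-/(_ uv) uV; apply: (subsetP (Wsub _ uv)); exact: Wu.
split; [|split; [|split; [|split; [|split; [|split]]]]].
- move=> a b; rewrite /f' => /or3P[/fV[aV bV eab] | /andP[/eqP-> /and3P[bV evb _]] | /andP[/eqP-> /and3P[aV eva _]]]; rewrite !in_setU1 ?eqxx ?aV ?bV ?orbT //.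
  by rewrite e_sym.
- exact: f'_sym.
- exact: f'_forest.
- move=> x xV; case: (eqVneq x v) => [->|xv].
    by rewrite /W' eqxx sub1set setU11.
  rewrite Wv //; have xV' := inV _ xV xv; case: compv.
    exact: setUS (WV _ xV').
  exact: subset_trans (WV _ xV') (subsetU1 _ _).
- move=> u uV'; split; first by exists u => //; exact: WuV'.
  move=> x y xV yV; case: (eqVneq u v) => [->|uv].
  + set R' := [rel a b | [&& f' a b, v \in W' a & v \in W' b]].
    have R'sym : symmetric R'.
      by move=> a b /=; rewrite f'_sym; case: (v \in W' a); case: (v \in W' b); rewrite ?andbF.
    suff H : forall z, z \in v |: V -> v \in W' z -> connect R' v z.
      move=> vx vy; apply: connect_trans _ (H _ yV vy).
      by rewrite (sym_connect_sym R'sym); exact: H.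
    move=> z zV'; case: (eqVneq z v) => [-> _|zv]; first exact: connect0.
    rewrite Wv //; have zV := inV _ zV' zv.
    case cz: (compv z); last by move=> /(subsetP (WV _ zV)); rewrite (negbTE vV).
    move=> _; have [r Er [ar cr]] := compv_rep cz.
    have rV : r \in V by case/and3P: ar.
    have Rvr : R' v r.
      by rewrite /= /f' eqxx ar orbT /W' eqxx set11 (negbTE (neqv _ rV)) -(compv_eq cr) cz setU11.
    apply: connect_trans (@connect1 _ R' _ _ Rvr) _.
    apply: (@connect_lift _ f _ (fun x => (x \in V) && compv x)).
    * by rewrite rV -(compv_eq cr).
    * move=> a b /andP[aV ca] fab; have [_ bV _] := fV fab.
      have cb : compv b by rewrite -(compv_eq (connect1 fab)).
      rewrite bV cb /= /f' fab /= !Wv ?neqv // ca cb !setU11.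
    * by [].
    * by rewrite (sym_connect_sym fsym).
  + have key z : u \in W' z -> (z != v) && (u \in W z).
      rewrite /W'; case: (eqVneq z v) => [_|zv]; first by rewrite in_set1 (negbTE uv).
      by case: compv; rewrite ?in_setU1 ?(negbTE uv).
    move=> /key/andP[xv ux] /key/andP[yv uy].
    apply: (@connect_lift _ [rel a b | [&& f a b, u \in W a & u \in W b]] _ predT) => //; last exact: (Wc u (inV _ uV' uv)).2 x y (inV _ xV xv) (inV _ yV yv) ux uy.
    move=> a b _ /and3P[fab ua ub] /=; have [aV bV _] := fV fab.
    rewrite /f' fab /=; rewrite (subsetP (Wsub _ (neqv _ aV))) //.
    by rewrite (subsetP (Wsub _ (neqv _ bV))).
- move=> a b aV' bV' eab.
  case: (eqVneq a v) => [av|av]; case: (eqVneq b v) => [bv|bv].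
  + by rewrite av bv; exists v; rewrite ?setU11 // /W' eqxx set11.
  + have bV := inV _ bV' bv; have evb : e v b by rewrite -av.
    exists b => //; rewrite Wv // cV // av setU11 in_setU1 Wu ?orbT //.
  + have aV := inV _ aV' av; have eva : e v a by rewrite -bv e_sym.
    exists a => //; rewrite Wv // cV // bv setU11 in_setU1 Wu ?orbT //.
  + have [x xV /andP[ax bx]] := We a b (inV _ aV' av) (inV _ bV' bv) eab.
    exists x; first by rewrite in_setU1 xV orbT.
    by rewrite !(subsetP (Wsub _ (neqv _ xV))).
- exact: WuV'.
Qed.

Lemma W'_size k : (forall x, x \in V -> #|W x| <= k.+1) ->
  forall x, x \in v |: V -> #|W' x| <= k.+2.
Proof.
move=> Hk x; rewrite /W' in_setU1; case: eqP => [_ _|_ /= xV]; first by rewrite cards1.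
case: compv; last exact: leq_trans (Hk _ xV) _.
by rewrite cardsU1; exact: (leq_add (leq_b1 _) (Hk _ xV)).
Qed.

End Step.

Lemma has_sfd_step (T : finType) (e : rel T) (e_sym : symmetric e) (V : {set T}) (v : T) k :
  v \notin V -> has_sfd e V k -> has_sfd e (v |: V) k.+1.
Proof.
move=> vV [f [W [H Hk]]].
have [fV [fsym _]] := H.
exists (f' e V v f), (W' e V v f W); split.
  exact: sfd_step.
exact: W'_size.
Qed.


Lemma has_sfd_all (T : finType) (e : rel T) (e_sym : symmetric e) n :
  forall (X : {set T}) k, #|X| = n -> has_sfd e (~: X) k -> has_sfd e setT (k + #|X|).
Proof.
elim: n => [|n IH] X k.
  by move/cards0_eq => ->; rewrite setC0 cards0 addn0.
move=> cX H.
have [x xX] : exists x, x \in X by apply/set0Pn; rewrite -card_gt0 cX.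
have cX' : #|X :\ x| = n by move: cX; rewrite (cardsD1 x X) xX => -[].
have E : x |: ~: X = ~: (X :\ x).
  by apply/setP => y; rewrite !inE; case: (eqVneq y x) => [->|]; rewrite ?xX.
have H1 := has_sfd_step e_sym (v := x) (V := ~: X) (k := k).
have vX : x \notin ~: X by rewrite inE xX.
rewrite E in H1; have H2 := IH _ _ cX' (H1 vX H).
by rewrite (cardsD1 x X) xX addnA addn1.
Qed.

Unset Implicit Arguments.

Theorem lemma3p3 (T : finType) (e : rel T) (e_sym : symmetric e)
    (e_irr : irreflexive e) (X : {set T}) :
  cmp e [set: T] <= cmp e (~: X) + #|X|.
Proof.
have cle (V : {set T}) : cmp e V <= #|V|.
  by rewrite /cmp; have := find_size (fun k => pbool (has_sfd e V k)) (iota 0 #|V|); rewrite size_iota.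
have cmin (V : {set T}) k : has_sfd e V k -> cmp e V <= k.
  move=> H; case: (ltnP k #|V|) => [lt|ge]; last exact: leq_trans (cle V) ge.
  rewrite leqNgt; apply/negP => /(before_find 0).
  rewrite nth_iota // add0n /pbool; by case: excluded_middle_informative.
have cspec (V : {set T}) : cmp e V < #|V| -> has_sfd e V (cmp e V).
  move=> lt.
  have hf : has (fun k => pbool (has_sfd e V k)) (iota 0 #|V|) by rewrite has_find size_iota.
  have := nth_find 0 hf; rewrite -/(cmp e V) nth_iota // add0n /pbool.
  by case: excluded_middle_informative.
case: (ltnP (cmp e (~: X)) #|~: X|) => [lt|ge].
  exact: cmin (has_sfd_all e_sym erefl (cspec _ lt)).
apply: leq_trans (cle setT) _; rewrite cardsT -(cardsC X) addnC leq_add2r //.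
Qed.
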